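(* Let $n\in\mathbb{N}$ and let $c_n$ be the entire function $c_n(\eta)=\sum_{l=0}^\infty c(n;l)\eta^{2nl}$, where $$c(n;l)=\frac{(-1)^l n}{(2n)^{2l+\frac{1}{2n}}\,\Gamma\!\left(l+\frac{1}{2n}\right)\,l!}.$$ Then for every $\omega\in\mathbb{R}$, $$e^{-\frac{\omega^{2n}}{2n}}=\int_{-\infty}^{\infty}c_n(\omega t)\,e^{-\frac{t^{2n}}{2n}}\,dt=\int_{-\infty}^{\infty}\sum_{l=0}^\infty c(n;l)(\omega t)^{2nl}e^{-\frac{t^{2n}}{2n}}\,dt.$$ *)

(* Defs.v *)
From Stdlib Require Import Reals Arith.
From Coquelicot Require Import Coquelicot.
Open Scope R_scope.

Definition Gamma (s : R) : R :=
  RInt_gen (fun t => Rpower t (s - 1) * exp (- t)) (at_right 0) (Rbar_locally p_infty).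

Definition coef (n l : nat) : R :=
  (-1) ^ l * INR n /
  (Rpower (2 * INR n) (2 * INR l + / (2 * INR n))
   * Gamma (INR l + / (2 * INR n)) * INR (Factorial.fact l)).

Definition cfun (n : nat) (eta : R) : R :=
  Series (fun l => coef n l * eta ^ (2 * n * l)).

(* Main.v *)
Require Import Defs.
From Stdlib Require Import Reals Lra Lia.
From Coquelicot Require Import Coquelicot.
Open Scope R_scope.

Definition gg (n : nat) (t : R) : R := exp (- (t ^ (2 * n)) / (2 * INR n)).
Definition hh (n l : nat) (t : R) : R := t ^ (2 * n * l) * gg n t.

Lemma mr_pos n : (1 <= n)%nat -> 0 < 2 * INR n.
Proof. intros h. apply le_INR in h. simpl in h. lra. Qed.

Lemma exp_le_mono x y : x <= y -> exp x <= exp y.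
Proof. intros H. destruct (Rle_lt_or_eq_dec _ _ H) as [H1|H1].
  left; apply exp_increasing; auto. subst; lra. Qed.

Lemma pow_le_one x k : 0 <= x <= 1 -> x ^ k <= 1.
Proof. intros H; induction k; simpl; [lra|]. 
  assert (0 <= x ^ k) by (apply pow_le; lra). nra. Qed.

Lemma pow_even_nonneg (t : R) (k : nat) : 0 <= t ^ (2 * k).
Proof. rewrite pow_mult. apply pow_le. nra. Qed.

Lemma pow_even_opp (t : R) (k : nat) : (- t) ^ (2 * k) = t ^ (2 * k).
Proof. rewrite !pow_mult. f_equal. ring. Qed.

Lemma hh_pow_eq n l t : t ^ (2 * n * l) = t ^ (2 * (n * l)).
Proof. f_equal. lia. Qed.

Lemma gg_pos n t : 0 < gg n t.
Proof. apply exp_pos. Qed.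

Lemma gg_le1 n t : (1 <= n)%nat -> gg n t <= 1.
Proof.
  intros h. unfold gg. rewrite <- exp_0. apply exp_le_mono.
  pose proof (mr_pos n h). pose proof (pow_even_nonneg t n).
  unfold Rdiv. rewrite <- Ropp_mult_distr_l.
  assert (0 <= t ^ (2*n) * / (2 * INR n)).
  { apply Rmult_le_pos; auto. left; apply Rinv_0_lt_compat; auto. }
  lra.
Qed.

Lemma gg_even n t : gg n (- t) = gg n t.
Proof. unfold gg. rewrite pow_even_opp. auto. Qed.

Lemma hh_even n l t : hh n l (- t) = hh n l t.
Proof. unfold hh. rewrite gg_even, !hh_pow_eq, pow_even_opp. auto. Qed.

Lemma hh_nonneg n l t : 0 <= hh n l t.
Proof. unfold hh. rewrite hh_pow_eq. apply Rmult_le_pos. apply pow_even_nonneg.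
  left; apply gg_pos. Qed.

Lemma hh_le1 n l t : (1 <= n)%nat -> Rabs t <= 1 -> hh n l t <= 1.
Proof. intros h Ht. unfold hh. rewrite hh_pow_eq, pow_mult.
  assert (-1 <= t <= 1) by (unfold Rabs in Ht; destruct (Rcase_abs t); lra).
  assert ((t^2) ^ (n*l) <= 1). { apply pow_le_one. split; nra. }
  pose proof (gg_le1 n t h). pose proof (gg_pos n t).
  assert (0 <= (t^2)^(n*l)) by (apply pow_le; nra). nra.
Qed.

Lemma hh_cont n l t : continuous (hh n l) t.
Proof. apply (ex_derive_continuous (K:=R_AbsRing) (V:=R_NormedModule)). unfold hh, gg. auto_derive. auto. Qed.

Lemma gg_cont n t : continuous (gg n) t.
Proof. apply (ex_derive_continuous (K:=R_AbsRing) (V:=R_NormedModule)). unfold gg. auto_derive. auto. Qed.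

Lemma hh_exRInt n l a b : ex_RInt (hh n l) a b.
Proof. apply (ex_RInt_continuous (V:=R_CompleteNormedModule)). intros; apply hh_cont. Qed.

Lemma sum_nonneg (f : nat -> R) m : (forall k, 0 <= f k) -> 0 <= sum_f_R0 f m.
Proof. intros H; induction m; simpl; [apply H| specialize (H (S m)); lra]. Qed.

Lemma sum_last_le (f : nat -> R) j : (forall k, 0 <= f k) -> f j <= sum_f_R0 f j.
Proof. intros H. destruct j; simpl. lra.
  pose proof (sum_nonneg f j H). lra. Qed.

Lemma pow_le_fact_exp y j : 0 <= y -> y ^ j <= INR (Factorial.fact j) * exp y.
Proof. intros Hy.
  pose proof (exp_ge_taylor y j Hy).
  pose proof (sum_last_le (fun k => y ^ k / INR (Factorial.fact k)) j) as H2.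
  simpl in H2.
  assert (Hf : 0 < INR (Factorial.fact j)) by (apply lt_0_INR, Factorial.lt_O_fact).
  assert (H1 : y ^ j / INR (Factorial.fact j) <= exp y).
  { eapply Rle_trans; [apply H2|auto]. intros k. apply Rmult_le_pos. apply pow_le; auto.
    left; apply Rinv_0_lt_compat, lt_0_INR, Factorial.lt_O_fact. }
  apply (Rmult_le_compat_l (INR (Factorial.fact j))) in H1; [|lra].
  replace (INR (Factorial.fact j) * (y ^ j / INR (Factorial.fact j))) with (y ^ j) in H1
    by (field; lra). auto.
Qed.

Definition Dl (n l : nat) : R :=
  4 * (1 + INR (Factorial.fact (2 * n * l + 2)) * (2 * INR n) ^ (2 * n * l + 2)).

Lemma Dl_ge4 n l : (1 <= n)%nat -> 4 <= Dl n l.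
Proof. intros h. unfold Dl. pose proof (mr_pos n h).
  assert (0 <= INR (Factorial.fact (2 * n * l + 2)) * (2 * INR n) ^ (2 * n * l + 2)).
  { apply Rmult_le_pos. apply pos_INR. apply pow_le; lra. } lra. Qed.

Lemma hh_bound n l t : (1 <= n)%nat -> 0 <= t -> hh n l t * (1 + t) ^ 2 <= Dl n l.
Proof.
  intros h Ht. pose proof (Dl_ge4 n l h). pose proof (hh_nonneg n l t).
  destruct (Rle_dec t 1) as [Ht1|Ht1].
  - assert (hh n l t <= 1) by (apply hh_le1; auto; rewrite Rabs_pos_eq; lra).
    assert ((1+t)^2 <= 4) by nra. nra.
  - set (k := (2 * n * l)%nat). set (j := (k + 2)%nat).
    set (mr := 2 * INR n). pose proof (mr_pos n h) as Hmr. fold mr in Hmr.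
    set (y := t ^ (2 * n) / mr).
    assert (Hy : 0 <= y). { unfold y. apply Rmult_le_pos. apply pow_even_nonneg. left; apply Rinv_0_lt_compat; auto. }
    assert (E1 : t ^ j <= t ^ (2 * n * j)). { apply Rle_pow. lra. rewrite <- (Nat.mul_1_l j) at 1. apply Nat.mul_le_mono_r. lia. }
    assert (E2 : t ^ (2 * n * j) = y ^ j * mr ^ j).
    { rewrite pow_mult, <- Rpow_mult_distr. f_equal. unfold y. field. lra. }
    assert (E3 : y ^ j <= INR (Factorial.fact j) * exp y) by (apply pow_le_fact_exp; auto).
    assert (E4 : gg n t = exp (- y)). { unfold gg, y, mr. f_equal. field. unfold mr in Hmr; lra. }
    assert (E5 : exp (- y) * exp y = 1). { rewrite <- exp_plus. replace (-y+y) with 0 by ring. apply exp_0. }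
    assert (E6 : hh n l t * t ^ 2 = t ^ j * gg n t). { unfold hh, j, k. rewrite pow_add. ring. }
    assert (Hmj : 0 <= mr ^ j) by (apply pow_le; lra).
    assert (Hfj : 0 <= INR (Factorial.fact j)) by apply pos_INR.
    assert (E7 : t ^ j * gg n t <= INR (Factorial.fact j) * mr ^ j).
    { rewrite E4. pose proof (exp_pos (-y)).
      apply Rle_trans with (y ^ j * mr ^ j * exp (- y)).
      - rewrite <- E2. apply Rmult_le_compat_r; lra.
      - apply Rle_trans with (INR (Factorial.fact j) * exp y * mr ^ j * exp (- y)).
        + apply Rmult_le_compat_r. lra. apply Rmult_le_compat_r; auto.
        + right. replace (INR (Factorial.fact j) * exp y * mr ^ j * exp (- y))
            with (INR (Factorial.fact j) * mr ^ j * (exp (-y) * exp y)) by ring.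
          rewrite E5. ring. }
    assert ((1+t)^2 <= 4 * t^2) by nra.
    unfold Dl. fold k j mr.
    assert (0 <= hh n l t) by auto. nra.
Qed.

Definition FF n l y := RInt (hh n l) 0 y.

Lemma RInt_split n l a b : RInt (hh n l) a b = FF n l b - FF n l a.
Proof. unfold FF.
  assert (H : RInt (hh n l) 0 a + RInt (hh n l) a b = RInt (hh n l) 0 b)
    by (apply (RInt_Chasles (V:=R_CompleteNormedModule)); apply hh_exRInt).
  lra. Qed.

Lemma FF_mono n l a b : a <= b -> FF n l a <= FF n l b.
Proof. intros H. assert (0 <= RInt (hh n l) a b).
  { apply RInt_ge_0; auto. apply hh_exRInt. intros; apply hh_nonneg. }
  rewrite RInt_split in H0. lra. Qed.

Lemma FF_0 n l : FF n l 0 = 0.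
Proof. unfold FF. rewrite RInt_point. reflexivity. Qed.

Lemma FF_odd n l y : FF n l (- y) = - FF n l y.
Proof.
  unfold FF.
  pose proof (is_RInt_comp_opp (V:=R_NormedModule) (hh n l) 0 y (RInt (hh n l) (-0) (-y))
     (RInt_correct (V:=R_CompleteNormedModule) _ _ _ (hh_exRInt n l _ _))) as H.
  replace (-0) with 0 in H by ring.
  apply (is_RInt_unique (V:=R_CompleteNormedModule)) in H. rewrite <- H.
  rewrite (RInt_ext _ (fun x => opp (hh n l x))).
  2:{ intros x _. rewrite hh_even. reflexivity. }
  rewrite (RInt_opp (V:=R_CompleteNormedModule) (hh n l)) by apply hh_exRInt. reflexivity.
Qed.

Lemma FF_bound n l y : (1 <= n)%nat -> 0 <= y -> FF n l y <= Dl n l.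
Proof.
  intros h Hy. pose proof (Dl_ge4 n l h) as HD. set (D := Dl n l) in *.
  assert (Hi : is_RInt (fun t => D / (1 + t) ^ 2) 0 y (minus (- D / (1 + y)) (- D / (1 + 0)))).
  { apply (is_RInt_derive (V:=R_CompleteNormedModule) (fun t => - D / (1 + t))).
    - intros x Hx. rewrite Rmin_left in Hx by lra. 
      auto_derive. lra. field. lra.
    - intros x Hx. rewrite Rmin_left in Hx by lra. rewrite Rmax_right in Hx by lra.
      apply (ex_derive_continuous (K:=R_AbsRing) (V:=R_NormedModule)). auto_derive. apply Rmult_integral_contrapositive; split; [lra|]. apply Rmult_integral_contrapositive; split; lra. }
  apply (is_RInt_unique (V:=R_CompleteNormedModule)) in Hi.
  unfold FF. apply Rle_trans with (RInt (fun t => D / (1 + t) ^ 2) 0 y).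
  - apply RInt_le; auto. apply hh_exRInt.
    eexists. apply (is_RInt_derive (V:=R_CompleteNormedModule) (fun t => - D / (1 + t))).
    + intros x Hx. rewrite Rmin_left in Hx by lra. 
      auto_derive. lra. field. lra.
    + intros x Hx. rewrite Rmin_left in Hx by lra. rewrite Rmax_right in Hx by lra.
      apply (ex_derive_continuous (K:=R_AbsRing) (V:=R_NormedModule)). auto_derive. apply Rmult_integral_contrapositive; split; [lra|]. apply Rmult_integral_contrapositive; split; lra.
    + intros x Hx. pose proof (hh_bound n l x h ltac:(lra)). fold D in H.
      assert (0 < (1 + x) ^ 2) by (apply pow_lt; lra).
      apply (Rmult_le_reg_r ((1+x)^2)); auto. unfold Rdiv. rewrite Rmult_assoc, Rinv_l; lra.
  - rewrite Hi. change (minus ?a ?b) with (a - b).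
    assert (0 < D / (1 + y)) by (apply Rdiv_lt_0_compat; lra).
    replace (- D / (1 + 0)) with (- D) by field. unfold Rdiv in *. lra.
Qed.

Lemma FF_small n l y : (1 <= n)%nat -> 0 <= y <= 1 -> FF n l y <= y.
Proof.
  intros h Hy. unfold FF.
  pose proof (abs_RInt_le_const (hh n l) 0 y 1 ltac:(lra) (hh_exRInt n l 0 y)).
  assert (Rabs (RInt (hh n l) 0 y) <= y).
  { replace y with ((y - 0) * 1) at 2 by ring. apply H. intros t Ht.
    rewrite Rabs_pos_eq by apply hh_nonneg. apply hh_le1; auto. rewrite Rabs_pos_eq; lra. }
  pose proof (Rle_abs (RInt (hh n l) 0 y)). lra.
Qed.

Definition EE n l (z : R) : Prop := exists y, 0 <= y /\ z = FF n l y.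

Lemma EE_bound n l : (1 <= n)%nat -> bound (EE n l).
Proof. intros h. exists (Dl n l). intros z [y [Hy ->]]. apply FF_bound; auto. Qed.

Lemma EE_ex n l : exists z, EE n l z.
Proof. exists (FF n l 0). exists 0. split; auto; lra. Qed.

Definition Kl n (h : (1 <= n)%nat) l : R :=
  proj1_sig (completeness (EE n l) (EE_bound n l h) (EE_ex n l)).

Lemma Kl_lub n h l : is_lub (EE n l) (Kl n h l).
Proof. unfold Kl. destruct completeness as [m Hm]. simpl. auto. Qed.

Lemma FF_le_K n h l y : FF n l y <= Kl n h l.
Proof.
  destruct (Kl_lub n h l) as [Hub _].
  destruct (Rle_dec 0 y).
  - apply Hub. exists y; auto.
  - apply Rle_trans with (FF n l 0). apply FF_mono; lra. apply Hub. exists 0; split; auto; lra.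
Qed.

Lemma K_approx n h l eps : 0 < eps ->
  exists Y, 0 <= Y /\ forall y, Y <= y -> Kl n h l - eps < FF n l y.
Proof.
  intros He. destruct (Kl_lub n h l) as [Hub Hleast].
  destruct (Classical_Prop.classic (exists Y, 0 <= Y /\ Kl n h l - eps < FF n l Y)) as [[Y [HY1 HY2]]|Hn].
  - exists Y. split; auto. intros y Hy. pose proof (FF_mono n l Y y Hy). lra.
  - exfalso. assert (Kl n h l <= Kl n h l - eps); [|lra].
    apply Hleast. intros z [y [Hy ->]]. apply Rnot_lt_le. intros Hc. apply Hn. exists y; auto.
Qed.

Lemma K_lower n h l : gg n 2 <= Kl n h l.
Proof.
  apply Rle_trans with (FF n l 2); [|apply FF_le_K].
  apply Rle_trans with (RInt (hh n l) 1 2).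
  - apply Rle_trans with (RInt (fun _ => gg n 2) 1 2).
    + rewrite RInt_const. change (scal ?a ?b) with (a * b). lra.
    + apply RInt_le. lra. apply ex_RInt_const. apply hh_exRInt.
      intros x Hx. unfold hh. 
      assert (1 <= x ^ (2*n*l)) by (apply pow_R1_Rle; lra).
      assert (gg n 2 <= gg n x).
      { unfold gg. apply exp_le_mono. unfold Rdiv. rewrite <- !Ropp_mult_distr_l. apply Ropp_le_contravar.
        apply Rmult_le_compat_r. 
        destruct n. simpl. rewrite Rmult_0_r, Rinv_0. lra.
        left; apply Rinv_0_lt_compat. apply mr_pos; lia.
        apply pow_incr. lra. }
      pose proof (gg_pos n 2). nra.
  - rewrite RInt_split. pose proof (FF_mono n l 0 1). rewrite FF_0 in H. lra.
Qed.

Lemma K_pos n h l : 0 < Kl n h l.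
Proof. pose proof (K_lower n h l). pose proof (gg_pos n 2). lra. Qed.

Lemma RInt_le_2K n h l a b : RInt (hh n l) a b <= 2 * Kl n h l.
Proof. rewrite RInt_split. pose proof (FF_odd n l (-a)). rewrite Ropp_involutive in H.
  pose proof (FF_le_K n h l b). pose proof (FF_le_K n h l (-a)). lra. Qed.

Lemma RInt_ge_0' n l a b : a <= b -> 0 <= RInt (hh n l) a b.
Proof. intros. rewrite RInt_split. pose proof (FF_mono n l a b H). lra. Qed.

Lemma two_sided n h l eps : 0 < eps -> exists B, 0 <= B /\
  forall a b, a <= - B -> B <= b -> Rabs (RInt (hh n l) a b - 2 * Kl n h l) < eps.
Proof.
  intros He. destruct (K_approx n h l (eps/2)) as [Y [HY HYa]]. lra.
  exists Y. split; auto. intros a b Ha Hb.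
  pose proof (RInt_le_2K n h l a b).
  rewrite RInt_split in *. pose proof (FF_odd n l (-a)). rewrite Ropp_involutive in H0.
  pose proof (HYa b Hb). pose proof (HYa (-a) ltac:(lra)).
  rewrite Rabs_left1 by lra. lra.
Qed.

Lemma pow_exp_ln t k : 0 < t -> t ^ k = exp (INR k * ln t).
Proof. intros Ht. rewrite <- (exp_ln (t ^ k)) by (apply pow_lt; auto). rewrite ln_pow; auto. Qed.

Definition fG (s u : R) := Rpower u (s - 1) * exp (- u).
Definition phi n t := t ^ (2 * n) / (2 * INR n).
Definition dphi n t := t ^ (pred (2 * n)).
Definition psi n u := Rpower (2 * INR n * u) (/ (2 * INR n)).
Definition sl n l := INR l + / (2 * INR n).

Lemma key_id n l t : (1 <= n)%nat -> 0 < t ->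
  dphi n t * fG (sl n l) (phi n t) = Rpower (2 * INR n) (1 - sl n l) * hh n l t.
Proof.
  intros h Ht. pose proof (mr_pos n h) as Hm.
  unfold dphi, fG, phi, hh, gg, sl, Rpower.
  rewrite ln_div by (try apply pow_lt; auto).
  rewrite ln_pow by auto.
  rewrite (pow_exp_ln t (pred (2*n))) by auto.
  rewrite (pow_exp_ln t (2*n*l)) by auto.
  replace (- (t ^ (2 * n) / (2 * INR n))) with (- t ^ (2 * n) / (2 * INR n)) by (field; lra).
  rewrite <- !Rmult_assoc, <- !exp_plus. f_equal. f_equal.
  assert (INR (pred (2*n)) = 2 * INR n - 1).
  { rewrite <- Nat.sub_1_r, minus_INR by lia. rewrite mult_INR. simpl. ring. }
  rewrite H, !mult_INR. simpl. field. lra.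
Qed.

Lemma psi_pos n u : 0 < psi n u.
Proof. unfold psi, Rpower. apply exp_pos. Qed.

Lemma psi_pow n u : (1 <= n)%nat -> 0 < u -> psi n u ^ (2 * n) = 2 * INR n * u.
Proof. intros h Hu. pose proof (mr_pos n h).
  rewrite pow_exp_ln by apply psi_pos. unfold psi, Rpower. rewrite ln_exp.
  rewrite mult_INR. simpl (INR 2).
  replace ((1 + 1) * INR n * (/ (2 * INR n) * ln (2 * INR n * u))) with (ln (2 * INR n * u)) by (field; lra).
  apply exp_ln. apply Rmult_lt_0_compat; lra.
Qed.

Lemma phi_psi n u : (1 <= n)%nat -> 0 < u -> phi n (psi n u) = u.
Proof. intros h Hu. unfold phi. rewrite psi_pow by auto. pose proof (mr_pos n h). field. lra. Qed.

Lemma psi_small n u d : (1 <= n)%nat -> 0 < d -> 0 < u -> u < d ^ (2 * n) / (2 * INR n) -> psi n u < d.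
Proof. intros h Hd Hu Hlt. pose proof (mr_pos n h).
  destruct (Rlt_le_dec (psi n u) d) as [|Hc]; auto. exfalso.
  assert (d ^ (2*n) <= psi n u ^ (2*n)) by (apply pow_incr; lra).
  rewrite psi_pow in H0 by auto.
  apply (Rmult_lt_compat_l (2 * INR n)) in Hlt; auto.
  replace (2 * INR n * (d ^ (2 * n) / (2 * INR n))) with (d ^ (2*n)) in Hlt by (field; lra). lra.
Qed.

Lemma psi_large n u Y : (1 <= n)%nat -> 0 <= Y -> 0 < u -> Y ^ (2 * n) / (2 * INR n) < u -> Y < psi n u.
Proof. intros h HY Hu Hlt. pose proof (mr_pos n h).
  destruct (Rlt_le_dec Y (psi n u)) as [|Hc]; auto. exfalso.
  assert (psi n u ^ (2*n) <= Y ^ (2*n)) by (apply pow_incr; pose proof (psi_pos n u); lra).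
  rewrite psi_pow in H0 by auto.
  apply (Rmult_lt_compat_l (2 * INR n)) in Hlt; auto.
  replace (2 * INR n * (Y ^ (2 * n) / (2 * INR n))) with (Y ^ (2*n)) in Hlt by (field; lra). lra.
Qed.

Lemma fG_cont s u : 0 < u -> continuous (fG s) u.
Proof. intros. apply (ex_derive_continuous (K:=R_AbsRing) (V:=R_NormedModule)).
  unfold fG, Rpower. auto_derive. auto. Qed.

Lemma fG_exRInt s a b : 0 < a -> 0 < b -> ex_RInt (fG s) a b.
Proof. intros. apply (ex_RInt_continuous (V:=R_CompleteNormedModule)). intros z Hz.
  apply fG_cont. assert (0 < Rmin a b) by (apply Rmin_glb_lt; auto). lra. Qed.

Lemma subst n (h : (1 <= n)%nat) l u1 u2 : 0 < u1 -> 0 < u2 ->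
  RInt (fG (sl n l)) u1 u2 = Rpower (2 * INR n) (1 - sl n l) * RInt (hh n l) (psi n u1) (psi n u2).
Proof.
  intros H1 H2. pose proof (mr_pos n h) as Hm.
  set (a := psi n u1). set (b := psi n u2).
  assert (Ha : 0 < a) by apply psi_pos. assert (Hb : 0 < b) by apply psi_pos.
  assert (Hmin : 0 < Rmin a b) by (apply Rmin_glb_lt; auto).
  pose proof (is_RInt_comp (V:=R_CompleteNormedModule) (fG (sl n l)) (phi n) (dphi n) a b) as Hc.
  unfold a, b in Hc. rewrite !phi_psi in Hc by auto. fold a b in Hc.
  assert (Hi : is_RInt (fun y => Rpower (2 * INR n) (1 - sl n l) * hh n l y) a b (RInt (fG (sl n l)) u1 u2)).
  { apply (is_RInt_ext (V:=R_NormedModule) (fun y => scal (dphi n y) (fG (sl n l) (phi n y)))).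
    - intros x Hx. change (scal ?p ?q) with (p * q). apply key_id; auto. lra.
    - apply Hc.
      + intros x Hx. apply fG_cont. unfold phi. apply Rdiv_lt_0_compat; auto. apply pow_lt. lra.
      + intros x Hx. split.
        * unfold phi, dphi. auto_derive. auto. replace (n + (n + 0))%nat with (2 * n)%nat by lia. rewrite mult_INR. simpl (INR 2). field. lra.
        * apply (ex_derive_continuous (K:=R_AbsRing) (V:=R_NormedModule)). unfold dphi. auto_derive. auto. }
  apply (is_RInt_unique (V:=R_CompleteNormedModule)) in Hi. rewrite <- Hi.
  apply (RInt_scal (V:=R_CompleteNormedModule) (hh n l) a b). apply hh_exRInt.
Qed.

Lemma RInt_gen_helper (f : R -> R) Fa Fb (FFa : Filter Fa) (FFb : Filter Fb) (l : R) :
  (forall eps : posreal, filter_prod Fa Fb (fun ab => ex_RInt f (fst ab) (snd ab) /\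
       Rabs (RInt f (fst ab) (snd ab) - l) < eps)) ->
  is_RInt_gen f Fa Fb l.
Proof.
  intros H P [eps HP]. unfold filtermapi.
  eapply filter_imp; [|apply (H eps)]. intros [a b] [Hex Hlt]. cbn [fst snd] in *.
  exists (RInt f a b). split.
  - apply (RInt_correct (V:=R_CompleteNormedModule)); auto.
  - apply HP. exact Hlt.
Qed.

Lemma arith1 C (eps : R) : 0 < C -> C * (2 * (eps / (4 * C))) = eps / 2.
Proof. intros. field. lra. Qed.

Lemma Gamma_is n (h : (1 <= n)%nat) l :
  is_RInt_gen (fG (sl n l)) (at_right 0) (Rbar_locally p_infty)
    (Rpower (2 * INR n) (1 - sl n l) * Kl n h l).
Proof.
  apply RInt_gen_helper. 1,2: exact _.
  intros eps. pose proof (mr_pos n h) as Hm.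
  set (C := Rpower (2 * INR n) (1 - sl n l)).
  assert (HC : 0 < C) by (unfold C, Rpower; apply exp_pos).
  set (eta := eps / (4 * C)).
  assert (Heta : 0 < eta) by (unfold eta; apply Rdiv_lt_0_compat; [apply cond_pos|lra]).
  set (d := Rmin eta 1).
  assert (Hd : 0 < d) by (apply Rmin_glb_lt; lra).
  assert (Hd1 : d <= 1) by apply Rmin_r.
  assert (Hde : d <= eta) by apply Rmin_l.
  destruct (K_approx n h l eta Heta) as [Y [HY HYa]].
  assert (Hd2 : 0 < d ^ (2 * n) / (2 * INR n)) by (apply Rdiv_lt_0_compat; auto; apply pow_lt; auto).
  assert (HY2 : 0 <= Y ^ (2 * n) / (2 * INR n)) by (apply Rmult_le_pos; [apply pow_le; auto| left; apply Rinv_0_lt_compat; auto]).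
  apply (Filter_prod _ _ _ (fun u => 0 < u < d ^ (2 * n) / (2 * INR n)) (fun u => Y ^ (2 * n) / (2 * INR n) < u)).
  - exists (mkposreal _ Hd2). intros y Hy Hpos. change (Rabs (y - 0) < d ^ (2 * n) / (2 * INR n)) in Hy.
    rewrite Rminus_0_r, Rabs_pos_eq in Hy by lra. lra.
  - exists (Y ^ (2 * n) / (2 * INR n)). auto.
  - intros u1 u2 Hu1 Hu2. cbn [fst snd]. split.
    + apply fG_exRInt; lra.
    + rewrite (subst n h l u1 u2) by lra. fold C. rewrite RInt_split.
      assert (Hp1 : psi n u1 < d) by (apply psi_small; auto; lra).
      assert (Hp1' : 0 < psi n u1) by apply psi_pos.
      assert (Hp2 : Y < psi n u2) by (apply psi_large; auto; lra).
      pose proof (FF_small n l (psi n u1) h ltac:(lra)).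
      pose proof (FF_mono n l 0 (psi n u1) ltac:(lra)). rewrite FF_0 in H0.
      pose proof (HYa (psi n u2) ltac:(lra)).
      pose proof (FF_le_K n h l (psi n u2)).
      replace (C * (FF n l (psi n u2) - FF n l (psi n u1)) - C * Kl n h l)
        with (C * (FF n l (psi n u2) - FF n l (psi n u1) - Kl n h l)) by ring.
      rewrite Rabs_mult, (Rabs_pos_eq C) by lra.
      assert (Rabs (FF n l (psi n u2) - FF n l (psi n u1) - Kl n h l) < 2 * eta)
        by (apply Rabs_def1; lra).
      apply Rle_lt_trans with (C * (2 * eta)).
      * apply Rmult_le_compat_l; lra.
      * unfold eta. rewrite (arith1 C eps HC). pose proof (cond_pos eps) as Hep. clearbody C eta d. clear - Hep. lra.
Qed.

Lemma Gamma_val n (h : (1 <= n)%nat) l :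
  Gamma (sl n l) = Rpower (2 * INR n) (1 - sl n l) * Kl n h l.
Proof.
  transitivity (RInt_gen (fG (sl n l)) (at_right 0) (Rbar_locally p_infty)).
  { reflexivity. }
  pose proof (Gamma_is n h l) as H.
  pose proof (@is_RInt_gen_unique R_CompleteNormedModule _ _
    (Proper_StrongProper _ (at_right_proper_filter 0))
    (Proper_StrongProper _ (Rbar_locally_filter p_infty)) _ _ H) as H2.
  exact H2.
Qed.

Lemma coef_K n (h : (1 <= n)%nat) l :
  coef n l * (2 * Kl n h l) = (-1) ^ l / ((2 * INR n) ^ l * INR (Factorial.fact l)).
Proof.
  pose proof (mr_pos n h) as Hm. pose proof (K_pos n h l) as HK.
  unfold coef. change (Gamma (INR l + / (2 * INR n))) with (Gamma (sl n l)).
  rewrite (Gamma_val n h l).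
  set (P1 := Rpower (2 * INR n) (2 * INR l + / (2 * INR n))).
  set (P2 := Rpower (2 * INR n) (1 - sl n l)).
  assert (HP2 : 0 < P2) by (unfold P2, Rpower; apply exp_pos).
  assert (HP1 : 0 < P1) by (unfold P1, Rpower; apply exp_pos).
  assert (E : P1 * P2 = 2 * INR n * (2 * INR n) ^ l).
  { unfold P1, P2. rewrite <- Rpower_plus.
    replace (2 * INR l + / (2 * INR n) + (1 - sl n l)) with (INR (S l))
      by (unfold sl; rewrite S_INR; field; lra).
    rewrite Rpower_pow by auto. simpl. ring. }
  assert (Hf : 0 < INR (Factorial.fact l)) by (apply lt_0_INR, Factorial.lt_O_fact).
  assert (Hp : 0 < (2 * INR n) ^ l) by (apply pow_lt; auto).
  replace P1 with (2 * INR n * (2 * INR n) ^ l / P2) by (field_simplify_eq; [lra| lra]).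
  field. repeat split; lra.
Qed.

Lemma tail_bound (u w : nat -> R) N :
  (forall k, Rabs (u k) <= w k) -> ex_series w ->
  Rabs (Series u - sum_f_R0 u N) <= Series w - sum_f_R0 w N.
Proof.
  intros H Hw.
  assert (Hu : ex_series (fun k => Rabs (u k))).
  { apply (ex_series_le (V:=R_CompleteNormedModule)) with w; auto. intros k. 
    change (norm (Rabs (u k))) with (Rabs (Rabs (u k))). rewrite Rabs_Rabsolu. auto. }
  assert (Hu' : ex_series u) by (apply ex_series_Rabs; auto).
  rewrite (Series_incr_n u (S N)) by (auto; lia).
  rewrite (Series_incr_n w (S N)) by (auto; lia). simpl pred.
  replace (sum_f_R0 u N + Series (fun k => u (S N + k)%nat) - sum_f_R0 u N)
    with (Series (fun k => u (S N + k)%nat)) by ring.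
  replace (sum_f_R0 w N + Series (fun k => w (S N + k)%nat) - sum_f_R0 w N)
    with (Series (fun k => w (S N + k)%nat)) by ring.
  apply Rle_trans with (Series (fun k => Rabs (u (S N + k)%nat))).
  - apply Series_Rabs. apply (ex_series_incr_n (fun k => Rabs (u k)) (S N)). auto.
  - apply Series_le. intros k. split. apply Rabs_pos. apply H.
    apply (ex_series_incr_n w (S N)). auto.
Qed.

Lemma partial_le_series (w : nat -> R) N :
  (forall k, 0 <= w k) -> ex_series w -> sum_f_R0 w N <= Series w.
Proof.
  intros H Hw. pose proof (tail_bound (fun _ => 0) w N) as T.
  assert (Series (fun _ : nat => 0) = 0).
  { apply is_series_unique. unfold is_series.
    apply filterlim_ext with (fun _ => 0).
    - intros k. rewrite sum_n_Reals. induction k; simpl; lra.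
    - apply filterlim_const. }
  assert (H1 : sum_f_R0 (fun _ => 0) N = 0).
  { clear. induction N; simpl; lra. }
  rewrite H0, H1 in T. rewrite Rminus_0_r, Rabs_R0 in T.
  assert (0 <= Series w - sum_f_R0 w N). apply T. intros; rewrite ?Rabs_R0; auto. auto. lra.
Qed.

Lemma series_eventually (w : nat -> R) eps :
  ex_series w -> 0 < eps -> exists N0, forall N, (N0 <= N)%nat -> Rabs (Series w - sum_f_R0 w N) < eps.
Proof.
  intros Hw He. pose proof (Series_correct w Hw) as Hs.
  unfold is_series in Hs.
  destruct (proj1 (filterlim_locally _ _) Hs (mkposreal eps He)) as [N0 HN0]. exists N0. intros N HN. specialize (HN0 N HN).
  rewrite <- sum_n_Reals. change (Rabs (sum_n w N - Series w) < eps) in HN0.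
  rewrite Rabs_minus_sym. exact HN0.
Qed.

Lemma sum_split (Q v : nat -> R) N0 N : (N0 <= N)%nat ->
  (forall k, (N0 < k)%nat -> Q k <= v k) ->
  sum_f_R0 Q N <= sum_f_R0 Q N0 + (sum_f_R0 v N - sum_f_R0 v N0).
Proof.
  intros HN H. induction HN. lra.
  simpl. specialize (H (S m) ltac:(lia)). lra.
Qed.

Lemma sum_const_bound (Q : nat -> R) N c : (forall k, (k <= N)%nat -> Q k <= c) ->
  sum_f_R0 Q N <= INR (S N) * c.
Proof.
  induction N; intros H. simpl. specialize (H 0%nat ltac:(lia)). lra.
  change (sum_f_R0 Q (S N)) with (sum_f_R0 Q N + Q (S N)).
  assert (H0 : sum_f_R0 Q N <= INR (S N) * c) by (apply IHN; intros; apply H; lia).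
  replace (INR (S (S N)) * c) with (INR (S N) * c + c) by (rewrite (S_INR (S N)); ring).
  specialize (H (S N) ltac:(lia)). lra.
Qed.

Lemma sum_abs (u : nat -> R) N : Rabs (sum_f_R0 u N) <= sum_f_R0 (fun k => Rabs (u k)) N.
Proof. induction N; simpl. lra. eapply Rle_trans. apply Rabs_triang. lra. Qed.

Lemma sum_ext (u v : nat -> R) N : (forall k, u k = v k) -> sum_f_R0 u N = sum_f_R0 v N.
Proof. intros H; induction N; simpl; rewrite H; [|rewrite IHN]; auto. Qed.

Lemma sum_minus (u v : nat -> R) N : sum_f_R0 (fun k => u k - v k) N = sum_f_R0 u N - sum_f_R0 v N.
Proof. induction N; simpl. auto. rewrite IHN. ring. Qed.

Lemma finite_B (P : nat -> R -> R -> Prop) :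
  (forall l, exists B, 0 <= B /\ forall a b, a <= - B -> B <= b -> P l a b) ->
  forall N0, exists B, 0 <= B /\ forall l, (l <= N0)%nat -> forall a b, a <= - B -> B <= b -> P l a b.
Proof.
  intros H N0. induction N0.
  - destruct (H 0%nat) as [B [HB HP]]. exists B. split; auto. intros l Hl. replace l with 0%nat by lia. auto.
  - destruct IHN0 as [B1 [HB1 HP1]]. destruct (H (S N0)) as [B2 [HB2 HP2]].
    exists (Rmax B1 B2). split. eapply Rle_trans; [apply HB1|apply Rmax_l].
    intros l Hl a b Ha Hb. pose proof (Rmax_l B1 B2). pose proof (Rmax_r B1 B2).
    destruct (Nat.eq_dec l (S N0)). subst. apply HP2; lra. apply HP1; try lia; lra.
Qed.

Lemma exp_series y : is_series (fun k => y ^ k / INR (Factorial.fact k)) (exp y).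
Proof.
  pose proof (is_exp_Reals y) as H. unfold is_pseries in H.
  apply (is_series_ext _ _ _ (fun k => ltac:(reflexivity)) ) in H.
  eapply is_series_ext; [|exact H]. intros k. simpl. rewrite pow_n_pow. unfold Rdiv. reflexivity.
Qed.

Definition xx n (w : R) := w ^ (2 * n) / (2 * INR n).
Definition aa n w l := coef n l * w ^ (2 * n * l).
Definition vv n w l := xx n w ^ l / INR (Factorial.fact l).
Definition cc n w l := (- xx n w) ^ l / INR (Factorial.fact l).
Definition SS n w t := Series (fun l => coef n l * (w * t) ^ (2 * n * l)).
Definition EB n w z l := (xx n w * z) ^ l / INR (Factorial.fact l) / (2 * gg n 2).

Lemma xx_nonneg n w : (1 <= n)%nat -> 0 <= xx n w.
Proof. intros h. unfold xx. apply Rmult_le_pos. apply pow_even_nonneg.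
  left; apply Rinv_0_lt_compat, mr_pos; auto. Qed.

Lemma aa_K n (h : (1 <= n)%nat) w l : aa n w l * (2 * Kl n h l) = cc n w l.
Proof.
  pose proof (mr_pos n h). pose proof (coef_K n h l).
  unfold aa, cc, xx.
  replace (coef n l * w ^ (2 * n * l) * (2 * Kl n h l)) with (coef n l * (2 * Kl n h l) * w ^ (2 * n * l)) by ring.
  rewrite H0, pow_mult.
  replace (- (w ^ (2 * n) / (2 * INR n))) with ((-1) * w ^ (2 * n) * / (2 * INR n)) by (field; lra).
  rewrite !Rpow_mult_distr. rewrite pow_inv.
  assert (0 < INR (Factorial.fact l)) by (apply lt_0_INR, Factorial.lt_O_fact).
  assert (0 < (2 * INR n) ^ l) by (apply pow_lt; lra).
  assert (0 < 2 ^ l) by (apply pow_lt; lra).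
  assert (0 < INR n ^ l) by (apply pow_lt; apply lt_0_INR; lia).
  rewrite ?Rpow_mult_distr. field. repeat split; lra.
Qed.

Lemma abs_cc n w l : (1 <= n)%nat -> Rabs (cc n w l) = vv n w l.
Proof. intros h. unfold cc, vv. unfold Rdiv. rewrite Rabs_mult, <- RPow_abs, Rabs_Ropp, Rabs_pos_eq by (apply xx_nonneg; auto).
  rewrite Rabs_pos_eq. auto. left; apply Rinv_0_lt_compat, lt_0_INR, Factorial.lt_O_fact. Qed.

Lemma vv_nonneg n w l : (1 <= n)%nat -> 0 <= vv n w l.
Proof. intros h. unfold vv. apply Rmult_le_pos. apply pow_le, xx_nonneg; auto.
  left; apply Rinv_0_lt_compat, lt_0_INR, Factorial.lt_O_fact. Qed.

Lemma abs_aa n (h : (1 <= n)%nat) w l : Rabs (aa n w l) * (2 * Kl n h l) = vv n w l.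
Proof. pose proof (K_pos n h l). rewrite <- (Rabs_pos_eq (2 * Kl n h l)) by lra.
  rewrite <- Rabs_mult, aa_K. apply abs_cc; auto. Qed.

Lemma abs_aa_bound n (h : (1 <= n)%nat) w l : Rabs (aa n w l) <= vv n w l / (2 * gg n 2).
Proof. pose proof (abs_aa n h w l). pose proof (K_lower n h l). pose proof (gg_pos n 2).
  pose proof (Rabs_pos (aa n w l)).
  apply (Rmult_le_reg_r (2 * gg n 2)). lra. unfold Rdiv. rewrite Rmult_assoc, Rinv_l by lra.
  rewrite Rmult_1_r. rewrite <- H. apply Rmult_le_compat_l; lra. Qed.

Lemma EB_series n w z : ex_series (EB n w z).
Proof. eexists. unfold EB. apply is_series_scal_r. apply exp_series. Qed.

Lemma EB_nonneg n w z l : (1 <= n)%nat -> 0 <= z -> 0 <= EB n w z l.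
Proof. intros h Hz. unfold EB. pose proof (gg_pos n 2). apply Rmult_le_pos.
  apply Rmult_le_pos. apply pow_le. apply Rmult_le_pos; auto. apply xx_nonneg; auto.
  left; apply Rinv_0_lt_compat, lt_0_INR, Factorial.lt_O_fact.
  left; apply Rinv_0_lt_compat; lra. Qed.

Lemma aa_z_bound n (h : (1 <= n)%nat) w z l : 0 <= z -> Rabs (aa n w l) * z ^ l <= EB n w z l.
Proof. intros Hz. pose proof (abs_aa_bound n h w l). pose proof (gg_pos n 2).
  apply Rle_trans with (vv n w l / (2 * gg n 2) * z ^ l).
  apply Rmult_le_compat_r. apply pow_le; auto. auto.
  right. unfold vv, EB. rewrite Rpow_mult_distr.
  assert (0 < INR (Factorial.fact l)) by (apply lt_0_INR, Factorial.lt_O_fact).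
  field. split; lra. Qed.

Lemma term_eq n w t l : coef n l * (w * t) ^ (2 * n * l) = aa n w l * (t ^ (2 * n)) ^ l.
Proof. unfold aa. rewrite Rpow_mult_distr, <- pow_mult. ring. Qed.

Lemma term_bound n (h : (1 <= n)%nat) w t B l : Rabs t <= B ->
  Rabs (coef n l * (w * t) ^ (2 * n * l)) <= EB n w (B ^ (2 * n)) l.
Proof. intros Ht. rewrite term_eq, Rabs_mult.
  assert (0 <= B) by (pose proof (Rabs_pos t); lra).
  assert (E : t ^ (2*n) <= B ^ (2*n)).
  { rewrite !pow_mult. apply pow_incr. split. nra.
    assert (-B <= t <= B) by (unfold Rabs in Ht; destruct (Rcase_abs t); lra). nra. }
  pose proof (pow_even_nonneg t n).
  rewrite (Rabs_pos_eq ((t ^ (2 * n)) ^ l)) by (apply pow_le; auto).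
  eapply Rle_trans; [|apply aa_z_bound; auto; apply pow_even_nonneg].
  apply Rmult_le_compat_l. apply Rabs_pos. apply pow_incr. lra.
Qed.

Lemma SS_eq n w t : SS n w t = PSeries (aa n w) (t ^ (2 * n)).
Proof. unfold SS, PSeries. apply Series_ext. intros k. apply term_eq. Qed.

Lemma CV_inf n (h : (1 <= n)%nat) w z : Rbar_lt (Rabs z) (CV_radius (aa n w)).
Proof.
  set (r := Rabs z + 1). pose proof (Rabs_pos z).
  destruct (CV_radius_bounded (aa n w)) as [Hub _].
  assert (Hr : Rbar_le r (CV_radius (aa n w))).
  { apply Hub. exists (exp (xx n w * r) / (2 * gg n 2)). intros k.
    pose proof (gg_pos n 2).
    rewrite Rabs_mult, (Rabs_pos_eq (r ^ k)) by (apply pow_le; unfold r; lra).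
    eapply Rle_trans. apply aa_z_bound; auto. unfold r; lra.
    unfold EB. apply Rmult_le_compat_r. left; apply Rinv_0_lt_compat; lra.
    assert (0 < INR (Factorial.fact k)) by (apply lt_0_INR, Factorial.lt_O_fact).
    pose proof (pow_le_fact_exp (xx n w * r) k ltac:(apply Rmult_le_pos; [apply xx_nonneg; auto| unfold r; lra])).
    apply (Rmult_le_reg_r (INR (Factorial.fact k))); auto. unfold Rdiv.
    rewrite Rmult_assoc, Rinv_l by lra. lra. }
  destruct (CV_radius (aa n w)); simpl in *; unfold r in Hr; auto; lra.
Qed.

Lemma SS_cont n (h : (1 <= n)%nat) w t : continuous (SS n w) t.
Proof.
  apply (continuous_ext (fun t => PSeries (aa n w) (t ^ (2 * n)))).
  { intros; symmetry; apply SS_eq. }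
  apply (continuous_comp (fun t => t ^ (2 * n)) (PSeries (aa n w))).
  - apply (ex_derive_continuous (K:=R_AbsRing) (V:=R_NormedModule)). auto_derive. auto.
  - apply continuity_pt_filterlim. apply PSeries_continuity. apply CV_inf; auto.
Qed.

Lemma Phi_cont n (h : (1 <= n)%nat) w t : continuous (fun t => SS n w t * gg n t) t.
Proof.
  apply (continuous_mult (K:=R_AbsRing) (SS n w) (gg n)). apply SS_cont; auto. apply gg_cont.
Qed.

Lemma Phi_exRInt n (h : (1 <= n)%nat) w a b : ex_RInt (fun t => SS n w t * gg n t) a b.
Proof. apply (ex_RInt_continuous (V:=R_CompleteNormedModule)). intros; apply Phi_cont; auto. Qed.

Definition SN n w N t := sum_f_R0 (fun l => aa n w l * hh n l t) N.

Lemma RInt_SN n w N a b : ex_RInt (SN n w N) a b /\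
  RInt (SN n w N) a b = sum_f_R0 (fun l => aa n w l * RInt (hh n l) a b) N.
Proof.
  induction N.
  - unfold SN. simpl. split.
    + apply (ex_RInt_scal (V:=R_NormedModule) (hh n 0)). apply hh_exRInt.
    + apply (RInt_scal (V:=R_CompleteNormedModule) (hh n 0)). apply hh_exRInt.
  - destruct IHN as [IH1 IH2].
    assert (E : forall t, SN n w (S N) t = plus (SN n w N t) (scal (aa n w (S N)) (hh n (S N) t))).
    { intros t. reflexivity. }
    assert (Hex : ex_RInt (fun t => plus (SN n w N t) (scal (aa n w (S N)) (hh n (S N) t))) a b).
    { apply (ex_RInt_plus (V:=R_NormedModule)); auto.
      apply (ex_RInt_scal (V:=R_NormedModule) (hh n (S N))). apply hh_exRInt. }
    split.
    + eapply (ex_RInt_ext (V:=R_NormedModule)); [|apply Hex]. intros; symmetry; apply E.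
    + rewrite (RInt_ext (V:=R_CompleteNormedModule) _ (fun t => plus (SN n w N t) (scal (aa n w (S N)) (hh n (S N) t)))).
      2:{ intros; apply E. }
      rewrite (RInt_plus (V:=R_CompleteNormedModule)); auto.
      2:{ apply (ex_RInt_scal (V:=R_NormedModule) (hh n (S N))). apply hh_exRInt. }
      rewrite (RInt_scal (V:=R_CompleteNormedModule) (hh n (S N))) by apply hh_exRInt.
      change (plus ?x ?y) with (x + y). change (scal ?x ?y) with (x * y).
      rewrite IH2. reflexivity.
Qed.

Lemma sum_mult_r (f : nat -> R) c N : sum_f_R0 (fun l => f l * c) N = sum_f_R0 f N * c.
Proof. induction N; simpl. auto. rewrite IHN. ring. Qed.

Lemma diff_bound n (h : (1 <= n)%nat) w N t B : Rabs t <= B ->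
  Rabs (SS n w t * gg n t - SN n w N t) <=
  Series (EB n w (B ^ (2 * n))) - sum_f_R0 (EB n w (B ^ (2 * n))) N.
Proof.
  intros Ht.
  assert (E : SN n w N t = sum_f_R0 (fun l => coef n l * (w * t) ^ (2 * n * l)) N * gg n t).
  { unfold SN. rewrite <- sum_mult_r. apply sum_ext. intros l. rewrite term_eq.
    unfold hh. rewrite <- pow_mult. ring. }
  rewrite E. unfold SS.
  rewrite <- Rmult_minus_distr_r, Rabs_mult, (Rabs_pos_eq (gg n t)) by (left; apply gg_pos).
  pose proof (gg_le1 n t h). pose proof (gg_pos n t).
  pose proof (tail_bound (fun l => coef n l * (w * t) ^ (2 * n * l)) (EB n w (B ^ (2 * n))) N
     (fun l => term_bound n h w t B l Ht) (EB_series n w _)).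
  pose proof (Rabs_pos (Series (fun l : nat => coef n l * (w * t) ^ (2 * n * l)) -
      sum_f_R0 (fun l : nat => coef n l * (w * t) ^ (2 * n * l)) N)).
  nra.
Qed.

Lemma vv_series n w : ex_series (vv n w).
Proof. eexists. unfold vv. apply exp_series. Qed.

Lemma cc_series n w : Series (cc n w) = exp (- xx n w).
Proof. apply is_series_unique. unfold cc. apply exp_series. Qed.

Lemma arith2 A r : 0 <= A -> 0 < r -> A * (r / (A + 1)) <= r.
Proof. intros. assert (E : A * (r / (A + 1)) = r - r / (A + 1)) by (field; lra).
  rewrite E. assert (0 < r / (A + 1)) by (apply Rdiv_lt_0_compat; lra). lra. Qed.

Lemma main_eps n (h : (1 <= n)%nat) w eps : 0 < eps -> exists B0, 0 <= B0 /\
  forall a b, a < - B0 -> B0 < b ->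
  Rabs (RInt (fun t => SS n w t * gg n t) a b - exp (- xx n w)) < eps.
Proof.
  intros He.
  destruct (series_eventually (vv n w) (eps / 5) (vv_series n w) ltac:(lra)) as [N0 HN0].
  assert (Hrho : 0 < eps / 5 / INR (S N0)) by (apply Rdiv_lt_0_compat; [lra| apply lt_0_INR; lia]).
  destruct (finite_B (fun l a b => Rabs (aa n w l) * Rabs (RInt (hh n l) a b - 2 * Kl n h l) <= eps / 5 / INR (S N0)))
    with (N0 := N0) as [B0 [HB0 HB0P]].
  { intros l. pose proof (Rabs_pos (aa n w l)).
    destruct (two_sided n h l (eps / 5 / INR (S N0) / (Rabs (aa n w l) + 1))) as [B [HB HBP]].
    { apply Rdiv_lt_0_compat; lra. }
    exists B. split; auto. intros a b Ha Hb. specialize (HBP a b Ha Hb).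
    apply Rle_trans with (Rabs (aa n w l) * (eps / 5 / INR (S N0) / (Rabs (aa n w l) + 1))).
    apply Rmult_le_compat_l; lra.
    apply arith2; auto. }
  exists B0. split; auto. intros a b Ha Hb.
  assert (Hab : a < b) by lra.
  pose proof (Rmax_l (- a) b) as Hm1. pose proof (Rmax_r (- a) b) as Hm2.
  destruct (series_eventually (EB n w (Rmax (- a) b ^ (2 * n))) (eps / 5 / (b - a)) (EB_series n w _))
    as [N1 HN1].
  { apply Rdiv_lt_0_compat; lra. }
  pose (N := max N0 N1).
  assert (HN0N : (N0 <= N)%nat) by apply Nat.le_max_l.
  assert (HN1N : (N1 <= N)%nat) by apply Nat.le_max_r.
  destruct (RInt_SN n w N a b) as [HexS HRS].
  assert (HA : Rabs (RInt (fun t => SS n w t * gg n t) a b - RInt (SN n w N) a b) < eps / 5).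
  { assert (E : RInt (fun t => SS n w t * gg n t) a b - RInt (SN n w N) a b =
              RInt (fun t => minus (SS n w t * gg n t) (SN n w N t)) a b).
    { rewrite (RInt_minus (V:=R_CompleteNormedModule)); auto. apply Phi_exRInt; auto. }
    rewrite E.
    eapply Rle_lt_trans. apply abs_RInt_le_const with
      (M := Series (EB n w (Rmax (- a) b ^ (2 * n))) - sum_f_R0 (EB n w (Rmax (- a) b ^ (2 * n))) N).
    lra. apply (ex_RInt_minus (V:=R_NormedModule)); auto. apply Phi_exRInt; auto.
    intros t Ht. apply diff_bound; auto. unfold Rabs; destruct (Rcase_abs t); lra.
    specialize (HN1 N HN1N).
    pose proof (Rle_abs (Series (EB n w (Rmax (- a) b ^ (2 * n))) - sum_f_R0 (EB n w (Rmax (- a) b ^ (2 * n))) N)).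
    apply (Rmult_lt_compat_l (b - a)) in HN1; [|lra].
    replace ((b - a) * (eps / 5 / (b - a))) with (eps / 5) in HN1 by (field; lra).
    assert (0 <= b - a) by lra.
    nra. }
  assert (HC : Rabs (sum_f_R0 (cc n w) N - exp (- xx n w)) < eps / 5).
  { rewrite <- cc_series, Rabs_minus_sym.
    eapply Rle_lt_trans. apply tail_bound. intros k. rewrite abs_cc; auto. apply Rle_refl.
    apply vv_series. specialize (HN0 N HN0N).
    pose proof (Rle_abs (Series (vv n w) - sum_f_R0 (vv n w) N)). lra. }
  assert (HB : Rabs (sum_f_R0 (fun l => aa n w l * (RInt (hh n l) a b - 2 * Kl n h l)) N) < 2 * (eps / 5)).
  { eapply Rle_lt_trans. apply sum_abs.
    eapply Rle_lt_trans. apply (sum_split _ (vv n w) N0 N HN0N).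
    - intros k Hk. rewrite Rabs_mult. rewrite <- abs_aa with (h := h).
      apply Rmult_le_compat_l. apply Rabs_pos.
      pose proof (RInt_le_2K n h k a b). pose proof (RInt_ge_0' n k a b ltac:(lra)).
      rewrite Rabs_left1 by lra. lra.
    - assert (S1 : sum_f_R0 (fun k => Rabs (aa n w k * (RInt (hh n k) a b - 2 * Kl n h k))) N0 <= eps / 5).
      { eapply Rle_trans. apply sum_const_bound with (c := eps / 5 / INR (S N0)).
        intros k Hk. rewrite Rabs_mult. apply HB0P; auto; lra.
        right. field. apply not_0_INR. lia. }
      pose proof (partial_le_series (vv n w) N (fun k => vv_nonneg n w k h) (vv_series n w)).
      specialize (HN0 N0 (le_n _)).
      pose proof (Rle_abs (Series (vv n w) - sum_f_R0 (vv n w) N0)). lra. }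
  assert (E2 : sum_f_R0 (fun l => aa n w l * (RInt (hh n l) a b - 2 * Kl n h l)) N =
               RInt (SN n w N) a b - sum_f_R0 (cc n w) N).
  { rewrite HRS, <- sum_minus. apply sum_ext. intros l. rewrite <- (aa_K n h w l). ring. }
  rewrite E2 in HB.
  replace (RInt (fun t => SS n w t * gg n t) a b - exp (- xx n w)) with
    ((RInt (fun t => SS n w t * gg n t) a b - RInt (SN n w N) a b) +
     (RInt (SN n w N) a b - sum_f_R0 (cc n w) N) + (sum_f_R0 (cc n w) N - exp (- xx n w))) by ring.
  eapply Rle_lt_trans. apply Rabs_triang.
  eapply Rle_lt_trans. apply Rplus_le_compat_r. apply Rabs_triang.
  lra.
Qed.

Theorem lemma1 (n : nat) (hn : (1 <= n)%nat) (omega : R) :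
  is_RInt_gen
    (fun t => Series (fun l => coef n l * (omega * t) ^ (2 * n * l))
              * exp (- (t ^ (2 * n)) / (2 * INR n)))
    (Rbar_locally m_infty) (Rbar_locally p_infty)
    (exp (- (omega ^ (2 * n)) / (2 * INR n))).
Proof.
  assert (E : exp (- (omega ^ (2 * n)) / (2 * INR n)) = exp (- xx n omega)).
  { f_equal. unfold xx. pose proof (mr_pos n hn). field. lra. }
  rewrite E.
  change (fun t => Series (fun l => coef n l * (omega * t) ^ (2 * n * l))
              * exp (- (t ^ (2 * n)) / (2 * INR n))) with (fun t => SS n omega t * gg n t).
  apply RInt_gen_helper. 1,2: exact _.
  intros eps. destruct (main_eps n hn omega eps (cond_pos eps)) as [B0 [HB0 HP]].
  apply (Filter_prod _ _ _ (fun a => a < - B0) (fun b => B0 < b)).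
  - exists (- B0). auto.
  - exists B0. auto.
  - intros a b Ha Hb. cbn [fst snd]. split. apply Phi_exRInt; auto. apply HP; auto.
Qed.
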